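(* Let $N\ge 2$ and let $G$ be a bulkless graph on boundary vertices $v_1,\ldots,v_N$ which solves the DBRP for some contiguous entropy data $S$ on $N$ cyclically ordered atomic regions. Then there exists a planar weighted graph $H$, containing boundary vertices $v_1,\ldots,v_N$, with $O(N^4)$ vertices and $O(N^4)$ edges, which solves the DBRP for the same data $S$.
   Context: Atomic boundary regions are labelled $1,\ldots,N$ and arranged cyclically in this order. A contiguous region is a nonempty proper subset of $[N]$ of the form $\{a,a+1,\ldots,a+m\}$ (indices mod $N$). Contiguous entropy data is an assignment of a real number $S(R)\ge 0$ to each contiguous region $R$ with $S(R)=S([N]\setminus R)$. A weighted graph solves the DBRP for this data if it is a finite undirected graph with nonnegative real edge weights containing distinguished boundary vertices $v_1,\ldots,v_N$ such that for every contiguous $R$, the min-cut value between $\{v_i:i\in R\}$ and $\{v_j:j\notin R\}$ (the minimum total weight of an edge set whose removal disconnects every vertex of the first set from every vertex of the second) equals $S(R)$. A bulkless graph is a solution whose only vertices are $v_1,\ldots,v_N$ (a complete graph on them with nonnegative weights). *)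

(* Defs.v *)
From HB Require Import structures.
From mathcomp Require Import all_boot all_order all_algebra.
From mathcomp Require Import all_classical all_reals all_analysis.
Set Implicit Arguments. Unset Strict Implicit. Unset Printing Implicit Defensive.
Import Order.TTheory GRing.Theory Num.Theory.
Import numFieldNormedType.Exports.
Local Open Scope ring_scope.

(* Cyclically ordered atomic regions are 'I_N (labels 1..N shifted to 0..N-1).
   A contiguous region: nonempty proper subset of the form {a, a+1, ..., a+m} mod N. *)
Definition contiguous (N : nat) (A : {set 'I_N}) : Prop :=
  A != finset.set0 /\ A != [set: 'I_N] /\
  exists (a : 'I_N) (m : nat),
    A = [set i : 'I_N | [exists k : 'I_m.+1, val i == ((a + k) %% N)%N]].

Definition entropy_data (R : realType) (N : nat) (S : {set 'I_N} -> R) : Prop :=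
  forall A, contiguous A -> 0 <= S A /\ S A = S (~: A).

Definition wgraph_ok (R : realType) (V : finType) (E : {set {set V}})
    (w : {set V} -> R) : Prop :=
  (forall e, e \in E -> #|e| = 2%N) /\ (forall e, e \in E -> 0 <= w e).

Definition remaining (V : finType) (E F : {set {set V}}) : rel V :=
  fun x y => [set x; y] \in E :\: F.

Definition separates (V : finType) (E F : {set {set V}}) (A B : {set V}) : Prop :=
  forall a b, a \in A -> b \in B -> ~~ connect (remaining E F) a b.

Definition is_mincut (R : realType) (V : finType) (E : {set {set V}})
    (w : {set V} -> R) (A B : {set V}) (c : R) : Prop :=
  (exists F : {set {set V}}, F \subset E /\ separates E F A B /\ \sum_(e in F) w e = c)
  /\ (forall F : {set {set V}}, F \subset E -> separates E F A B -> c <= \sum_(e in F) w e).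

Definition solves_DBRP (R : realType) (N : nat) (V : finType) (E : {set {set V}})
    (w : {set V} -> R) (vb : 'I_N -> V) (S : {set 'I_N} -> R) : Prop :=
  forall A, contiguous A -> is_mincut E w (vb @: A) (vb @: ~: A) (S A).

(* Edge set of the complete graph on the boundary vertices 'I_N (bulkless graph). *)
Definition complete_edges (N : nat) : {set {set 'I_N}} :=
  [set e : {set 'I_N} | #|e| == 2%N].

Definition planar (R : realType) (V : finType) (E : {set {set V}}) : Prop :=
  exists (pos : V -> R * R) (gam : {set V} -> R -> R * R),
    injective pos /\
    (forall e, e \in E ->
       (exists x y, e = [set x; y] /\ gam e 0 = pos x /\ gam e 1 = pos y) /\
       {within [set t : R | 0 <= t <= 1], continuous (gam e)}%classic /\
       (forall s t, 0 <= s <= 1 -> 0 <= t <= 1 -> gam e s = gam e t -> s = t) /\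
       (forall t, 0 < t < 1 -> forall v, gam e t <> pos v)) /\
    (forall e e', e \in E -> e' \in E -> e != e' ->
       forall s t, 0 < s < 1 -> 0 < t < 1 -> gam e s <> gam e' t).

(* Main.v *)
Require Import Defs.
From HB Require Import structures.
From mathcomp Require Import all_boot all_order all_algebra.
From mathcomp Require Import all_classical all_reals all_analysis.
From mathcomp Require Import ring lra zify.
Import Order.TTheory GRing.Theory Num.Theory.
Import numFieldNormedType.Exports.
Set Implicit Arguments. Unset Strict Implicit. Unset Printing Implicit Defensive.
Local Open Scope ring_scope.

Lemma set2_eqT (T : finType) (u v u' v' : T) : [set u; v] = [set u'; v'] ->
  (u = u' /\ v = v') \/ (u = v' /\ v = u').
Proof.
move=> E.
have hu : u \in [set u'; v'] by rewrite -E set21.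
have hv : v \in [set u'; v'] by rewrite -E set22.
have hu' : u' \in [set u; v] by rewrite E set21.
have hv' : v' \in [set u; v] by rewrite E set22.
case: (eqVneq u u') => [eu|nu].
  subst u'; left; split => //.
  move: hv hv'; rewrite !inE => /orP[/eqP hv|/eqP //].
  by subst v; case/orP => /eqP.
right; move: hu; rewrite !inE (negbTE nu) /= => /eqP hu; split => //.
by move: hu'; rewrite !inE eq_sym (negbTE nu) /= => /eqP ->.
Qed.

Lemma conn_inv (T : finType) (r : rel T) (f : T -> bool) :
  (forall x y, r x y -> f x = f y) -> forall x y, connect r x y -> f x = f y.
Proof.
move=> H x y /connectP [p Hp ->]; elim: p x Hp => //= z p IH x /andP[rxz Hp].
by rewrite (H _ _ rxz); exact: IH.
Qed.

Lemma remaining_sym (T : finType) (E F : {set {set T}}) : symmetric (remaining E F).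
Proof. by move=> x y; rewrite /remaining finset.setUC. Qed.

Lemma sum_sub_le (R : realType) (T : finType) (X Y : {set T}) (f : T -> R) :
  X \subset Y -> (forall e, e \in Y -> 0 <= f e) -> \sum_(e in X) f e <= \sum_(e in Y) f e.
Proof.
move=> hXY h0; rewrite [X in _ <= X](big_setID X) /=.
have -> : Y :&: X = X by apply/finset.setIidPr.
rewrite lerDl; apply: sumr_ge0 => e; rewrite inE => /andP[_ ?]; exact: h0.
Qed.
Section Planar.
Variable R : realType.
Variable N : nat.

Definition chord := ('I_N * 'I_N)%type.
Definition sl (c : chord) : R := ((nat_of_ord c.1 + nat_of_ord c.2)%N)%:R.
Definition pr (c : chord) : R := ((nat_of_ord c.1 * nat_of_ord c.2)%N)%:R.
Definition pt (k : nat) : R * R := (k%:R, k%:R ^+ 2).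
Definition Xp (c d : chord) : R * R :=
  if sl c == sl d then pt c.1 else
  let x := (pr c - pr d) / (sl c - sl d) in (x, sl c * x - pr c).
Definition Lp : seq (R * R) := [seq Xp cd.1 cd.2 | cd <- enum {: chord * chord}].
Definition V := seq_sub Lp.
Definition pos (v : V) : R * R := ssval v.
Definition onc (c : chord) (P : R * R) : bool :=
  (P.2 == sl c * P.1 - pr c) && (P.1 ^+ 2 <= P.2).
Definition consec (c : chord) (u v : V) : bool :=
  [&& onc c (pos u), onc c (pos v), (pos u).1 < (pos v).1 &
   [forall z : V, onc c (pos z) ==> ~~ (((pos u).1 < (pos z).1) && ((pos z).1 < (pos v).1))]].
Definition edge (k : chord * chord) : {set V} :=
  if [pick uv : V * V | consec k.1 uv.1 uv.2 && (pos uv.1 == Xp k.1 k.2)] is Some uv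
  then [set uv.1; uv.2] else finset.set0.
Definition Ed : {set {set V}} := [set edge k | k : chord * chord] :\ finset.set0.
Definition oncE (c : chord) (e : {set V}) : bool :=
  [exists uv : V * V, (e == [set uv.1; uv.2]) && consec c uv.1 uv.2].
Definition wt (w : {set 'I_N} -> R) (e : {set V}) : R :=
  \sum_(c : chord | (nat_of_ord c.1 < nat_of_ord c.2)%N && oncE c e) w [set c.1; c.2].

Lemma Xp_in c d : Xp c d \in Lp.
Proof. by apply/mapP; exists (c, d) => //; rewrite mem_enum. Qed.

Definition vb (k : 'I_N) : V := SeqSub (Xp_in (k, k) (k, k)).

Lemma pos_vb k : pos (vb k) = pt k.
Proof. by rewrite /pos /= /Xp eqxx. Qed.

Lemma pos_inj : injective pos.
Proof. exact: val_inj. Qed.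

Lemma onc_range (c : chord) P : (nat_of_ord c.1 <= nat_of_ord c.2)%N -> onc c P ->
  (nat_of_ord c.1)%:R <= P.1 <= (nat_of_ord c.2)%:R.
Proof.
move=> hle /andP[/eqP h2 h]; rewrite h2 /sl /pr natrD natrM in h.
have hij : (nat_of_ord c.1)%:R <= (nat_of_ord c.2)%:R :> R by rewrite ler_nat.
move: h hij; set i : R := _%:R; set j : R := _%:R => h hij.
apply/andP; split; nra.
Qed.

Lemma onc_same c P Q : onc c P -> onc c Q -> P.1 = Q.1 -> P = Q.
Proof.
case: P => [p1 p2]; case: Q => [q1 q2] /andP[/eqP /= hp _] /andP[/eqP /= hq _] /= e.
by rewrite hp hq e.
Qed.

Lemma consec_uniq c u v v' : consec c u v -> consec c u v' -> v = v'.
Proof.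
move=> /and4P[hu hv huv /forallP hz] /and4P[_ hv' huv' /forallP hz'].
apply: pos_inj; apply: (onc_same hv hv').
case: (ltgtP (pos v).1 (pos v').1) => // hlt.
- by move: (hz' v); rewrite hv huv hlt.
- by move: (hz v'); rewrite hv' huv' hlt.
Qed.

Lemma consec_uniql c u u' v : consec c u v -> consec c u' v -> u = u'.
Proof.
move=> /and4P[hu hv huv /forallP hz] /and4P[hu' _ huv' /forallP hz'].
apply: pos_inj; apply: (onc_same hu hu').
case: (ltgtP (pos u).1 (pos u').1) => // hlt.
- by move: (hz u'); rewrite hu' huv' hlt.
- by move: (hz' u); rewrite hu huv hlt.
Qed.

Definition lerp (P Q : R * R) (t : R) : R * R :=
  (P.1 + t * (Q.1 - P.1), P.2 + t * (Q.2 - P.2)).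

Lemma onc_lerp c P Q t : onc c P -> onc c Q -> 0 <= t <= 1 -> onc c (lerp P Q t).
Proof.
case: P => [p1 p2]; case: Q => [q1 q2] /andP[/eqP /= hp hp'] /andP[/eqP /= hq hq'] /andP[t0 t1].
apply/andP; split => /=.
  by apply/eqP; rewrite hp hq; ring.
have h : 0 <= t * (1 - t) * (q1 - p1) ^+ 2.
  by apply: mulr_ge0; [apply: mulr_ge0; lra | exact: sqr_ge0].
nra.
Qed.


Lemma div_eq (a b x : R) : a != 0 -> a * x = b -> x = b / a.
Proof. by move=> ha <-; rewrite mulrAC divff ?mul1r. Qed.

Lemma onc_pt1 (c : chord) : onc c (pt c.1).
Proof. by rewrite /onc /pt /sl /pr /= natrD natrM lexx andbT; apply/eqP; ring. Qed.

Lemma onc_pt2 (c : chord) : onc c (pt c.2).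
Proof. by rewrite /onc /pt /sl /pr /= natrD natrM lexx andbT; apply/eqP; ring. Qed.

Lemma onc_pt (c : chord) (k : nat) : onc c (pt k) ->
  k = nat_of_ord c.1 \/ k = nat_of_ord c.2.
Proof.
rewrite /onc /pt /sl /pr /= natrD natrM => /andP[/eqP h _].
have : (k%:R - (nat_of_ord c.1)%:R) * (k%:R - (nat_of_ord c.2)%:R) == 0 :> R.
  apply/eqP; set i : R := (nat_of_ord c.1)%:R in h *; set j : R := (nat_of_ord c.2)%:R in h *.
  transitivity (k%:R ^+ 2 - ((i + j) * k%:R - i * j)); first by ring.
  by rewrite h subrr.
rewrite mulf_eq0 !subr_eq0 !eqr_nat => /orP[/eqP->|/eqP->]; [left|right] => //.
Qed.

Lemma vertex_start (c : chord) (y : V) : (nat_of_ord c.1 < nat_of_ord c.2)%N ->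
  onc c (pos y) -> (pos y).1 < (nat_of_ord c.2)%:R -> exists d, pos y = Xp c d.
Proof.
move=> hlt hy hx.
have : pos y \in Lp := ssvalP y.
case/mapP => [[d1 d2] _ hyd]; rewrite /Xp /= in hyd.
case: ifP hyd => hs hyd.
  move: hy; rewrite hyd => hy.
  case: (onc_pt hy) => hk.
    by exists c; rewrite /Xp eqxx hk.
  by move: hx; rewrite hyd /pt /= hk ltxx.
move: hy; rewrite hyd /onc /= => /andP[/eqP hl _].
set x0 := (pr d1 - pr d2) / (sl d1 - sl d2) in hl *.
have h12 : (sl d1 - sl d2) * x0 = pr d1 - pr d2.
  by rewrite /x0 mulrC divfK // subr_eq0 hs.
case: (eqVneq (sl c) (sl d1)) => hc1.
  have hc2 : sl c != sl d2 by rewrite hc1 hs.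
  exists d2; rewrite /Xp (negbTE hc2).
  have hx0 : x0 = (pr c - pr d2) / (sl c - sl d2).
    apply: div_eq; first by rewrite subr_eq0.
    have hp : pr c = pr d1 by move: hl; rewrite hc1; lra.
    by rewrite hc1 hp.
  by rewrite -hx0 hl.
exists d1; rewrite /Xp (negbTE hc1).
have hx0 : x0 = (pr c - pr d1) / (sl c - sl d1).
  apply: div_eq; first by rewrite subr_eq0.
  by rewrite mulrBl; move: hl; lra.
by rewrite -hx0 hl.
Qed.

Lemma Ed_oncE e : e \in Ed -> exists c u v, e = [set u; v] /\ consec c u v.
Proof.
rewrite !inE => /andP[ne /imsetP[k _ ek]].
move: ne; rewrite ek /edge; case: pickP => [[u v] /= /andP[hc _] _|_]; last by rewrite eqxx.
by exists k.1, u, v.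
Qed.

Lemma edge_in (c : chord) y z : (nat_of_ord c.1 < nat_of_ord c.2)%N ->
  consec c y z -> [set y; z] \in Ed.
Proof.
move=> hlt hc; have /and4P[hy hz hyz _] := hc.
have hx : (pos y).1 < (nat_of_ord c.2)%:R.
  by apply: (lt_le_trans hyz); case/andP: (onc_range (ltnW hlt) hz).
have [d hd] := vertex_start hlt hy hx.
rewrite !inE; apply/andP; split.
  by apply/eqP => /setP /(_ y); rewrite !inE eqxx.
apply/imsetP; exists (c, d) => //; rewrite /edge /=.
case: pickP => [[u v] /= /andP[huv /eqP hu]|H].
  have uy : u = y by apply: pos_inj; rewrite hu hd.
  subst u; by rewrite (consec_uniq huv hc).
by move: (H (y, z)); rewrite /= hc hd eqxx.
Qed.

Lemma onc_vb1 (c : chord) : onc c (pos (vb c.1)).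
Proof. by rewrite pos_vb onc_pt1. Qed.
Lemma onc_vb2 (c : chord) : onc c (pos (vb c.2)).
Proof. by rewrite pos_vb onc_pt2. Qed.

Definition below (c : chord) (z : V) : {set V} :=
  [set y : V | onc c (pos y) && ((pos y).1 < (pos z).1)].

Lemma chord_path (c : chord) (F : {set {set V}}) :
  (nat_of_ord c.1 < nat_of_ord c.2)%N ->
  (forall e, e \in F -> ~~ oncE c e) ->
  forall z, onc c (pos z) -> connect (remaining Ed F) (vb c.1) z.
Proof.
move=> hlt hF z.
move: {2}#|below c z| (leqnn #|below c z|) => n.
elim: n z => [|n IH] z hn hz; case: (set_0Vmem (below c z)) => [h0|[y0 hy0]].
- have hx : (pos z).1 = (nat_of_ord c.1)%:R.
    case/andP: (onc_range (ltnW hlt) hz) => h1 _.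
    case: (ltgtP (pos z).1 (nat_of_ord c.1)%:R) => // hlt2; first by move: h1; rewrite leNgt hlt2.
    by move: h0 => /setP /(_ (vb c.1)); rewrite !inE onc_vb1 pos_vb /= hlt2.
  have -> : z = vb c.1 by apply: pos_inj; apply: (onc_same hz (onc_vb1 c)); rewrite hx pos_vb.
  exact: connect0.
- by move: hn; rewrite leqn0 => /eqP/cards0_eq h0; move: hy0; rewrite h0 inE.
- have hx : (pos z).1 = (nat_of_ord c.1)%:R.
    case/andP: (onc_range (ltnW hlt) hz) => h1 _.
    case: (ltgtP (pos z).1 (nat_of_ord c.1)%:R) => // hlt2; first by move: h1; rewrite leNgt hlt2.
    by move: h0 => /setP /(_ (vb c.1)); rewrite !inE onc_vb1 pos_vb /= hlt2.
  have -> : z = vb c.1 by apply: pos_inj; apply: (onc_same hz (onc_vb1 c)); rewrite hx pos_vb.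
  exact: connect0.
- have [y hy hmax] := arg_maxP (fun y => (pos y).1) hy0.
  have : y \in below c z := hy.
  rewrite /below inE => /andP[hyc hyz].
  have hcons : consec c y z.
    rewrite /consec hyc hz hyz /=; apply/forallP => w; apply/implyP => hw.
    apply/negP => /andP[h1 h2].
    have hw' : w \in below c z by rewrite /below inE hw h2.
    have h3 := hmax w hw'.
    by move: h1; rewrite ltNge (h3 : (pos w).1 <= (pos y).1).
  have hsub : below c y \proper below c z.
    apply/properP; split.
      apply/fintype.subsetP => w; rewrite !inE => /andP[-> h] /=; exact: lt_trans h hyz.
    by exists y; rewrite !inE ?hyc ?hyz ?ltxx.
  have hcy : connect (remaining Ed F) (vb c.1) y.
    by apply: IH => //; rewrite -ltnS; exact: leq_trans (proper_card hsub) hn.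
  apply: (connect_trans hcy); apply: connect1.
  rewrite /remaining inE (edge_in hlt hcons) andbT.
  apply/negP => hF'; move: (hF _ hF') => /negP; apply.
  by apply/existsP; exists (y, z); rewrite eqxx hcons.
Qed.

Definition gam (e : {set V}) (t : R) : R * R :=
  if [pick uv : V * V | (e == [set uv.1; uv.2]) && ((pos uv.1).1 < (pos uv.2).1)] is Some uv
  then lerp (pos uv.1) (pos uv.2) t else (0, 0).

Lemma set2_eq (u v u' v' : V) : [set u; v] = [set u'; v'] ->
  (u = u' /\ v = v') \/ (u = v' /\ v = u').
Proof.
move=> E.
have hu : u \in [set u'; v'] by rewrite -E set21.
have hv : v \in [set u'; v'] by rewrite -E set22.
have hu' : u' \in [set u; v] by rewrite E set21.
have hv' : v' \in [set u; v] by rewrite E set22.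
case: (eqVneq u u') => [eu|nu].
  subst u'; left; split => //.
  move: hv hv'; rewrite !inE => /orP[/eqP hv|/eqP //].
  by subst v; case/orP => /eqP.
right; move: hu; rewrite !inE (negbTE nu) /= => /eqP hu; split => //.
by move: hu'; rewrite !inE eq_sym (negbTE nu) /= => /eqP ->.
Qed.

Lemma gamE e : e \in Ed -> exists c u v, [/\ e = [set u; v], consec c u v &
  forall t, gam e t = lerp (pos u) (pos v) t].
Proof.
move=> /Ed_oncE [c [u [v [he hc]]]]; exists c, u, v; split => // t.
have /and4P[_ _ huv _] := hc.
rewrite /gam; case: pickP => [[u' v'] /= /andP[/eqP he' hlt]|H].
  move: he'; rewrite he => /set2_eq [[-> ->]|[hu hv]] //.
  by subst; move: huv; rewrite ltNge (ltW hlt).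
by move: (H (u, v)); rewrite /= he eqxx huv.
Qed.

Lemma lerp_cont (P Q : R * R) : continuous (lerp P Q).
Proof.
move=> x; rewrite /continuous_at /lerp.
have h1 : ((fun t : R => P.1 + t * (Q.1 - P.1)) @ x --> P.1 + x * (Q.1 - P.1))%classic.
  by apply: cvgD; [exact: cvg_cst | apply: cvgMl; exact: cvg_id].
have h2 : ((fun t : R => P.2 + t * (Q.2 - P.2)) @ x --> P.2 + x * (Q.2 - P.2))%classic.
  by apply: cvgD; [exact: cvg_cst | apply: cvgMl; exact: cvg_id].
have := cvg_pair h1 h2.
move=> H; exact: H.
Qed.

Lemma interior_point c u v t : consec c u v -> 0 < t < 1 ->
  onc c (lerp (pos u) (pos v) t) /\
  (pos u).1 < (lerp (pos u) (pos v) t).1 < (pos v).1.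
Proof.
move=> /and4P[hu hv huv _] /andP[t0 t1]; split.
  by apply: onc_lerp => //; rewrite !ltW.
rewrite /lerp /=; apply/andP; split; nra.
Qed.

Lemma interior_vertex c u v t z : consec c u v -> 0 < t < 1 ->
  lerp (pos u) (pos v) t <> pos z.
Proof.
move=> hc ht hz; have [h1 h2] := interior_point hc ht.
move: hc => /and4P[_ _ _ /forallP /(_ z)].
by rewrite -hz h1 h2.
Qed.

Lemma consec_ext c c' u v : sl c = sl c' -> pr c = pr c' -> consec c u v = consec c' u v.
Proof.
by move=> hs hp; rewrite /consec /onc hs hp.
Qed.

Lemma Ed_planar : planar R Ed.
Proof.
exists pos, gam; split; first exact: pos_inj.
split.
  move=> e /gamE [c [u [v [he hc hg]]]].
  have /and4P[_ _ huv _] := hc.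
  split.
    exists u, v; split; first done; split; rewrite hg /lerp /=.
      by rewrite !mul0r !addr0; case: (pos u).
    by case: (pos u) (pos v) => [a b] [a' b'] /=; rewrite !mul1r; congr pair; ring.
  split.
    have -> : gam e = lerp (pos u) (pos v) by apply: funext.
    exact/continuous_subspaceT/lerp_cont.
  split.
    move=> s t _ _; rewrite !hg /lerp => [[h _]].
    move: h => /addrI /mulIf; apply; by rewrite subr_eq0 gt_eqF.
  by move=> t ht z; rewrite hg; exact: interior_vertex hc ht.
move=> e e' /gamE [c [u [v [he hc hg]]]] /gamE [c' [u' [v' [he' hc' hg']]]] hne s t hs ht.
rewrite hg hg' => hP.
have [hP1 hb1] := interior_point hc hs.
have [hP2 hb2] := interior_point hc' ht.
rewrite -hP in hP2 hb2.
remember (lerp (pos u) (pos v) s) as P eqn:eP.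
case: (eqVneq (sl c) (sl c')) => hsl.
  have hpr : pr c = pr c'.
    by move: hP1 hP2 => /andP[/eqP h1 _] /andP[/eqP h2 _]; move: h1 h2; rewrite hsl; lra.
  have hc2 : consec c u' v' by rewrite (consec_ext _ _ hsl hpr).
  move: (hc) (hc2) => /and4P[hu hv huv /forallP hz] /and4P[hu' hv' huv' /forallP hz'].
  case/andP: hb1 => b1 b2; case/andP: hb2 => b3 b4.
  case: (ltgtP (pos u).1 (pos u').1) => hlt.
  - move: (hz u'); rewrite hu' hlt /= => hn.
    by move: hn; rewrite (lt_trans b3 b2).
  - move: (hz' u); rewrite hu hlt /= => hn.
    by move: hn; rewrite (lt_trans b1 b4).
  - have uu : u = u' by apply: pos_inj; exact: onc_same hu hu' hlt.
    subst u'; have vv := consec_uniq hc hc2; subst v'.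
    by move: hne; rewrite he he' eqxx.
have hPX : P = Xp c c'.
  rewrite /Xp (negbTE hsl).
  move: hP1 hP2 => /andP[/eqP h1 _] /andP[/eqP h2 _].
  have hx : P.1 = (pr c - pr c') / (sl c - sl c').
    apply: div_eq; first by rewrite subr_eq0.
    by rewrite mulrBl; move: h1 h2; lra.
  by rewrite -hx -h1; clear; case: P.
apply: (interior_vertex (z := SeqSub (Xp_in c c')) hc hs).
by rewrite -eP /pos /= -hPX.
Qed.

Definition Dset (A : {set 'I_N}) : {set chord} :=
  [set c : chord | (nat_of_ord c.1 < nat_of_ord c.2)%N && ((c.1 \in A) != (c.2 \in A))].

Lemma sum_wt (w : {set 'I_N} -> R) (F : {set {set V}}) : \sum_(e in F) wt w e =
  \sum_(c : chord | (nat_of_ord c.1 < nat_of_ord c.2)%N) w [set c.1; c.2] *+ #|[set e in F | oncE c e]|.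
Proof.
rewrite /wt.
under eq_bigr do rewrite big_mkcondr.
rewrite exchange_big /=; apply: eq_bigr => c _.
rewrite -big_mkcondr -sumr_const; apply: eq_bigl => e; by rewrite inE.
Qed.

Lemma cut_lower (w : {set 'I_N} -> R) (A : {set 'I_N}) (F : {set {set V}}) :
  (forall c : chord, (nat_of_ord c.1 < nat_of_ord c.2)%N -> 0 <= w [set c.1; c.2]) ->
  separates Ed F (vb @: A) (vb @: ~: A) ->
  \sum_(c in Dset A) w [set c.1; c.2] <= \sum_(e in F) wt w e.
Proof.
move=> hw hsep; rewrite sum_wt.
rewrite (eq_bigl (fun c : chord => (nat_of_ord c.1 < nat_of_ord c.2)%N && ((c.1 \in A) != (c.2 \in A)))); last first.
  by move=> c; rewrite inE.
rewrite big_mkcondr /=; apply: ler_sum => c hc.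
case: ifP => hx; last exact: mulrn_wge0 (hw _ hc).
case: (set_0Vmem [set e in F | oncE c e]) => [h0|[e0 he0]].
  have hF : forall e, e \in F -> ~~ oncE c e.
    by move=> e he; apply/negP => hoe; move: h0 => /setP /(_ e); rewrite !inE he hoe.
  have hcon := chord_path hc hF (onc_vb2 c).
  case: (boolP (c.1 \in A)) => h1.
    have h2 : c.2 \in ~: A by rewrite inE; move: hx; rewrite h1; case: (c.2 \in A).
    by move: (hsep _ _ (imset_f vb h1) (imset_f vb h2)); rewrite hcon.
  have h2 : c.2 \in A by move: hx; rewrite (negbTE h1); case: (c.2 \in A).
  have h1' : c.1 \in ~: A by rewrite inE.
  by move: (hsep _ _ (imset_f vb h2) (imset_f vb h1')); rewrite (sym_connect_sym (@remaining_sym _ _ _)) hcon.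
have : (0 < #|[set e in F | oncE c e]|)%N by apply/card_gt0P; exists e0.
case: #|_| => // n _; rewrite mulrS lerDl; exact: mulrn_wge0 (hw _ hc).
Qed.

Definition sig (lo hi : nat) (z : V) : bool :=
  0 <= (lo + hi)%N%:R * (pos z).1 - (lo * hi)%N%:R - (pos z).2.

Lemma sig_vb lo hi (k : 'I_N) : (lo <= hi)%N -> sig lo hi (vb k) = (lo <= k <= hi)%N.
Proof.
move=> hlh; rewrite /sig pos_vb /pt /= natrD natrM.
have -> : ((lo%:R + hi%:R) * (nat_of_ord k)%:R - lo%:R * hi%:R - (nat_of_ord k)%:R ^+ 2 : R)
   = ((nat_of_ord k)%:R - lo%:R) * (hi%:R - (nat_of_ord k)%:R) by ring.
case: (leqP lo k) => h1; case: (leqP k hi) => h2 /=.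
- by apply: mulr_ge0; rewrite subr_ge0 ler_nat.
- apply/negbTE; rewrite -ltNge pmulr_rlt0; first by rewrite subr_lt0 ltr_nat.
  by rewrite subr_gt0 ltr_nat; exact: leq_ltn_trans hlh h2.
- apply/negbTE; rewrite -ltNge pmulr_llt0; first by rewrite subr_lt0 ltr_nat.
  by rewrite subr_gt0 ltr_nat; exact: leq_trans h1 hlh.
- by move: (leq_trans h2 (leq_trans (ltnW h1) hlh)); rewrite ltnn.
Qed.

Definition alph lo hi (c : chord) : R := (lo + hi)%N%:R - sl c.
Definition bet lo hi (c : chord) : R := pr c - (lo * hi)%N%:R.

Lemma sig_on lo hi c z : onc c (pos z) ->
  sig lo hi z = (0 <= alph lo hi c * (pos z).1 + bet lo hi c).
Proof.
move=> /andP[/eqP h _]; rewrite /sig h /alph /bet.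
by congr (0 <= _); ring.
Qed.

Lemma mono_lemma (al be a1 b1 a2 b2 : R) : a1 < b1 -> b1 <= a2 -> a2 < b2 ->
  (0 <= al * a1 + be) != (0 <= al * b1 + be) ->
  (0 <= al * a2 + be) = (0 <= al * b2 + be).
Proof.
move=> h1 h2 h3.
case: (leP 0 al) => ha.
  have i1 : al * a1 <= al * b1 by apply: ler_wpM2l => //; exact: ltW.
  have i2 : al * b1 <= al * a2 by apply: ler_wpM2l.
  have i3 : al * a2 <= al * b2 by apply: ler_wpM2l => //; exact: ltW.
  case: (leP 0 (al * a1 + be)); case: (leP 0 (al * b1 + be)) => //= p q _.
  - have r1 : 0 <= al * a2 + be by lra.
    have r2 : 0 <= al * b2 + be by lra.
    by rewrite r1 r2.
  - lra.
have i1 : al * b1 <= al * a1 by apply: ler_wnM2l => //; [exact: ltW | exact: ltW].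
have i2 : al * a2 <= al * b1 by apply: ler_wnM2l => //; exact: ltW.
have i3 : al * b2 <= al * a2 by apply: ler_wnM2l => //; exact: ltW.
case: (leP 0 (al * a1 + be)); case: (leP 0 (al * b1 + be)) => //= p q _.
- lra.
- have r1 : al * a2 + be < 0 by lra.
  have r2 : al * b2 + be < 0 by lra.
  by rewrite !ltNge in r1 r2; rewrite (negbTE r1) (negbTE r2).
Qed.

Lemma convex_lemma (al be i j x : R) : i <= x -> x <= j ->
  (0 <= al * i + be) = (0 <= al * j + be) ->
  (0 <= al * x + be) = (0 <= al * i + be).
Proof.
move=> h1 h2.
have H : (al * i <= al * x /\ al * x <= al * j) \/ (al * j <= al * x /\ al * x <= al * i).
  case: (leP 0 al) => ha.
    by left; split; apply: ler_wpM2l.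
  by right; split; apply: ler_wnM2l => //; exact: ltW.
case: (leP 0 (al * i + be)); case: (leP 0 (al * j + be)) => //= p q _.
  by apply/idP; case: H => -[? ?]; lra.
by apply/negbTE; rewrite -ltNge; case: H => -[? ?]; lra.
Qed.

Definition Fs lo hi : {set {set V}} :=
  [set e in Ed | [exists u in e, exists v in e, sig lo hi u && ~~ sig lo hi v]].

Lemma Fs_rem lo hi x y : remaining Ed (Fs lo hi) x y -> sig lo hi x = sig lo hi y.
Proof.
rewrite /remaining !inE => /andP[hnF hE].
move: hnF; rewrite hE /=.
case hx: (sig lo hi x); case hy: (sig lo hi y) => //; move/negP; case.
  apply/existsP; exists x; rewrite set21 /=; apply/existsP; exists y; by rewrite set22 hx hy.
apply/existsP; exists y; rewrite set22 /=; apply/existsP; exists x; by rewrite set21 hx hy.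
Qed.

Lemma Fs_sep lo hi (A : {set 'I_N}) b : (lo <= hi)%N ->
  (forall k : 'I_N, (lo <= k <= hi)%N = (k \in A) (+) b) ->
  separates Ed (Fs lo hi) (vb @: A) (vb @: ~: A).
Proof.
move=> hlh hA a c /imsetP[i hiA ->] /imsetP[j hjA ->]; apply/negP => hcon.
have := conn_inv (@Fs_rem lo hi) hcon; rewrite !sig_vb // !hA.
by rewrite inE in hjA; rewrite hiA (negbTE hjA); clear hA; case: b.
Qed.

Lemma Fs_key lo hi c e : e \in Fs lo hi -> oncE c e ->
  exists u v, [/\ e = [set u; v], consec c u v & sig lo hi u != sig lo hi v].
Proof.
rewrite inE => /andP[_ /existsP[a /andP[ha /existsP[b /andP[hb /andP[sa sb]]]]]].
move=> /existsP[[u v] /andP[/eqP he hc]]; exists u, v; split => //.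
apply/negP => /eqP huv; move: ha hb sa sb; rewrite he !inE.
by case/orP => /eqP ->; case/orP => /eqP ->; rewrite ?huv => ->.
Qed.

Lemma sig_vb1 lo hi (c : chord) : sig lo hi (vb c.1) =
  (0 <= alph lo hi c * (nat_of_ord c.1)%:R + bet lo hi c).
Proof. by rewrite (sig_on _ _ (onc_vb1 c)) pos_vb. Qed.
Lemma sig_vb2 lo hi (c : chord) : sig lo hi (vb c.2) =
  (0 <= alph lo hi c * (nat_of_ord c.2)%:R + bet lo hi c).
Proof. by rewrite (sig_on _ _ (onc_vb2 c)) pos_vb. Qed.

Lemma Fs_count lo hi (c : chord) : (nat_of_ord c.1 < nat_of_ord c.2)%N ->
  #|[set e in Fs lo hi | oncE c e]| = (sig lo hi (vb c.1) != sig lo hi (vb c.2)).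
Proof.
move=> hc.
case: (eqVneq (sig lo hi (vb c.1)) (sig lo hi (vb c.2))) => hs /=.
  apply/eqP; rewrite cards_eq0; apply/eqP/setP => e; rewrite finset.in_set finset.in_set0.
  apply/negP => /andP[hF ho].
  have [u [v [he hcons hsuv]]] := Fs_key hF ho.
  have /and4P[hu hv _ _] := hcons.
  move: hsuv; rewrite (sig_on _ _ hu) (sig_on _ _ hv).
  move: hs; rewrite sig_vb1 sig_vb2 => hs.
  have /andP[u1 u2] := onc_range (ltnW hc) hu.
  have /andP[v1 v2] := onc_range (ltnW hc) hv.
  by rewrite (convex_lemma u1 u2 hs) (convex_lemma v1 v2 hs) eqxx.
apply/eqP; rewrite eqn_leq; apply/andP; split.
  apply/card_le1_eqP => e1 e2 /finset.setIdP[hF1 ho1] /finset.setIdP[hF2 ho2].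
  have [u1 [v1 [he1 hc1 hs1]]] := Fs_key hF1 ho1.
  have [u2 [v2 [he2 hc2 hs2]]] := Fs_key hF2 ho2.
  move: (hc1) (hc2) => /and4P[hu1 hv1 huv1 /forallP hz1] /and4P[hu2 hv2 huv2 /forallP hz2].
  move: hs1 hs2; rewrite (sig_on _ _ hu1) (sig_on _ _ hv1) (sig_on _ _ hu2) (sig_on _ _ hv2).
  case: (ltgtP (pos u1).1 (pos u2).1) => hlt.
  - have hle : (pos v1).1 <= (pos u2).1.
      by move: (hz1 u2); rewrite hu2 hlt /= -leNgt.
    by move=> h1 /negP h2; exfalso; apply: h2; apply/eqP; apply: (mono_lemma huv1 hle huv2 h1).
  - have hle : (pos v2).1 <= (pos u1).1.
      by move: (hz2 u1); rewrite hu1 hlt /= -leNgt.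
    by move=> /negP h1 h2; exfalso; apply: h1; apply/eqP; apply: (mono_lemma huv2 hle huv1 h2).
  - move=> _ _.
    have uu : u1 = u2 by apply: pos_inj; exact: onc_same hu1 hu2 hlt.
    subst u2; have vv := consec_uniq hc1 hc2; subst v2.
    by rewrite he1 he2.
apply/card_gt0P; case: (set_0Vmem [set e in Fs lo hi | oncE c e]) => [h0|[e0 he0]]; last by exists e0.
have hF : forall e, e \in Fs lo hi -> ~~ oncE c e.
  move=> e he; apply/negP => hoe.
  have : e \in [set e in Fs lo hi | oncE c e] by apply/finset.setIdP.
  by rewrite h0 finset.in_set0.
have hcon := chord_path hc hF (onc_vb2 c).
by move: hs; rewrite (conn_inv (@Fs_rem lo hi) hcon) eqxx.
Qed.

Lemma cut_upper (w : {set 'I_N} -> R) (A : {set 'I_N}) lo hi b : (lo <= hi)%N ->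
  (forall k : 'I_N, (lo <= k <= hi)%N = (k \in A) (+) b) ->
  \sum_(e in Fs lo hi) wt w e = \sum_(c in Dset A) w [set c.1; c.2].
Proof.
move=> hlh hA; rewrite sum_wt.
rewrite [RHS](eq_bigl (fun c : chord => (nat_of_ord c.1 < nat_of_ord c.2)%N && ((c.1 \in A) != (c.2 \in A)))); last first.
  by move=> c; rewrite inE.
rewrite big_mkcondr /=; apply: eq_bigr => c hc.
rewrite Fs_count // !sig_vb // !hA.
by clear hA; case: b; case: (c.1 \in A); case: (c.2 \in A); rewrite /= ?mulr1n ?mulr0n.
Qed.

Lemma G_side (w : {set 'I_N} -> R) (S : {set 'I_N} -> R) (A : {set 'I_N}) :
  wgraph_ok (complete_edges N) w ->
  is_mincut (complete_edges N) w (id @: A) (id @: ~: A) (S A) ->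
  S A = \sum_(c in Dset A) w [set c.1; c.2].
Proof.
move=> [_ hw] [[F0 [hsub [hsep hsum]]] hmin].
have hinj : {in Dset A &, injective (fun c : chord => [set c.1; c.2])}.
  move=> c d; rewrite !inE => /andP[hc _] /andP[hd _] /set2_eqT [[h1 h2]|[h1 h2]].
    by case: c d {hc hd} h1 h2 => [? ?] [? ?] /= -> ->.
  by rewrite h1 h2 in hc; have := ltn_trans hc hd; rewrite ltnn.
set X := [set [set c.1; c.2] | c in Dset A].
have hsumX : \sum_(e in X) w e = \sum_(c in Dset A) w [set c.1; c.2] by rewrite big_imset.
have hXc : X \subset complete_edges N.
  apply/fintype.subsetP => e /imsetP[c hc ->]; rewrite /complete_edges inE cards2.
  move: hc; rewrite inE => /andP[hc _].
  have -> : (c.1 == c.2) = false by apply/negbTE; rewrite -(inj_eq val_inj) /= neq_ltn hc.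
  done.
have hXsep : separates (complete_edges N) X (id @: A) (id @: ~: A).
  move=> a b /imsetP[i hi ->] /imsetP[j hj ->]; apply/negP => hcon.
  have H : forall x y, remaining (complete_edges N) X x y -> (x \in A) = (y \in A).
    move=> x y; rewrite /remaining finset.in_setD => /andP[hnX hcomp].
    move: hcomp; rewrite /complete_edges inE cards2 => hxy.
    apply/eqP; apply: contraNT hnX => hA.
    case: (ltngtP x y) => hlt.
    - by apply/imsetP; exists (x, y) => //; rewrite inE /= hlt hA.
    - apply/imsetP; exists (y, x); first by rewrite inE /= hlt eq_sym hA.
      by rewrite /= finset.setUC.
    - have exy : x = y by apply: val_inj.
      by move: hxy; rewrite exy eqxx.
  have := conn_inv H hcon; rewrite hi; rewrite inE in hj; by rewrite (negbTE hj).
have hXF0 : X \subset F0.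
  apply/fintype.subsetP => e /imsetP[c hc ->]; apply/negPn/negP => hn.
  have hcomp : [set c.1; c.2] \in complete_edges N.
    by apply: (fintype.subsetP hXc); exact: imset_f.
  have hr : remaining (complete_edges N) F0 c.1 c.2 by rewrite /remaining finset.in_setD hn hcomp.
  move: hc; rewrite inE => /andP[_ hx].
  case: (boolP (c.1 \in A)) => h1.
    have h2 : c.2 \in ~: A by rewrite inE; move: hx; rewrite h1; case: (c.2 \in A).
    by move: (hsep _ _ (imset_f id h1) (imset_f id h2)); rewrite (connect1 hr).
  have h2 : c.2 \in A by move: hx; rewrite (negbTE h1); case: (c.2 \in A).
  have h1' : c.1 \in ~: A by rewrite inE.
  by move: (hsep _ _ (imset_f id h2) (imset_f id h1')); rewrite (sym_connect_sym (@remaining_sym _ _ _)) (connect1 hr).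
apply/eqP; rewrite eq_le; apply/andP; split.
  by rewrite -hsumX; apply: hmin.
rewrite -hsum -hsumX; apply: sum_sub_le => // e he; apply: hw; exact: (fintype.subsetP hsub).
Qed.

Lemma card_V : (#|{: V}| <= N ^ 4 + 1)%N.
Proof.
have hS : forall v : V, exists cd : chord * chord, Xp cd.1 cd.2 == pos v.
  move=> v; have : pos v \in Lp := ssvalP v.
  by case/mapP => cd _ ->; exists cd.
pose f (v : V) := [pick cd : chord * chord | Xp cd.1 cd.2 == pos v].
have finj : injective f.
  move=> u v; rewrite /f.
  case: pickP => [cd /eqP hu|hn]; last by have [cd0 hcd] := hS u; move: (hn cd0); rewrite hcd.
  case: pickP => [cd' /eqP hv|hn]; last by have [cd0 hcd] := hS v; move: (hn cd0); rewrite hcd.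
  by move=> [ecd]; apply: pos_inj; rewrite -hu -hv ecd.
have := leq_card f finj; rewrite card_option card_prod !card_prod !card_ord.
by rewrite addn1 (_ : (N * N * (N * N))%N = N ^ 4)%N // !expnS expn0 muln1 !mulnA.
Qed.

Lemma card_Ed : (#|Ed| <= N ^ 4)%N.
Proof.
apply: (leq_trans (subset_leq_card (subsetDl _ _))).
apply: (leq_trans (leq_imset_card _ _)).
rewrite card_prod !card_prod !card_ord.
by rewrite (_ : (N * N * (N * N))%N = N ^ 4)%N // !expnS expn0 muln1 !mulnA.
Qed.

Lemma wgraph_Ed (w : {set 'I_N} -> R) : wgraph_ok (complete_edges N) w -> wgraph_ok Ed (wt w).
Proof.
move=> [_ hw]; split.
  move=> e /Ed_oncE [c [u [v [he /and4P[_ _ huv _]]]]].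
  rewrite he cards2; have -> : (u != v) by apply/eqP => euv; move: huv; rewrite euv ltxx.
  done.
move=> e _; apply: sumr_ge0 => c /andP[hc _]; apply: hw.
rewrite /complete_edges inE cards2.
have -> : (c.1 == c.2) = false by apply/negbTE; rewrite -(inj_eq val_inj) /= neq_ltn hc.
done.
Qed.

Lemma vb_inj : injective vb.
Proof.
move=> k l /(congr1 pos); rewrite !pos_vb /pt => -[/eqP]; rewrite eqr_nat => /eqP h _.
exact: val_inj.
Qed.

End Planar.

Lemma modn_big (N x : nat) : (N <= x)%N -> (x < N + N)%N -> (x %% N = x - N)%N.
Proof.
move=> h1 h2; have e : x = (x - N + N)%N by rewrite subnK.
by rewrite {1}e modnDr modn_small //; lia.
Qed.

Lemma contig_interval (N : nat) (A : {set 'I_N}) : contiguous A ->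
  exists lo hi b, (lo <= hi)%N /\ forall k : 'I_N, (lo <= k <= hi)%N = (k \in A) (+) b.
Proof.
move=> [hne [hnT [a [m hA]]]].
have haN : (a < N)%N := ltn_ord a.
have memA : forall k : 'I_N, (k \in A) = [exists k' : 'I_m.+1, nat_of_ord k == ((a + k') %% N)%N].
  by move=> k; rewrite hA inE.
case: (ltnP (a + m) N) => ham.
  exists a, (a + m)%N, false; split; first exact: leq_addr.
  move=> k; rewrite memA addbF; apply/idP/existsP.
    move=> /andP[h1 h2]; have hk : (k - a < m.+1)%N by lia.
    exists (Ordinal hk) => /=; rewrite subnKC // modn_small //.
  case=> k' /eqP ->; have hk' := ltn_ord k'.
  rewrite modn_small; lia.
have hmN : (m.+1 < N)%N.
  rewrite ltnNge; apply/negP => hle; move/eqP: hnT; apply; apply/setP => k.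
  rewrite memA finset.in_setT; apply/existsP.
  have hk : ((k + N - a) %% N < m.+1)%N.
    by apply: (leq_trans (ltn_pmod _ _)) => //; lia.
  exists (Ordinal hk) => /=; rewrite modnDmr.
  have -> : (a + (k + N - a) = k + N)%N by lia.
  by rewrite modnDr modn_small.
exists (a + m.+1 - N)%N, (a.-1)%N, true; split; first by lia.
move=> k; rewrite memA addbT; apply/idP/idP.
  move=> /andP[h1 h2]; apply/negP => /existsP[k' /eqP hk]; have hk' := ltn_ord k'.
  move: hk; case: (ltnP (a + k') N) => h3.
    by rewrite modn_small //; lia.
  by rewrite modn_big //; lia.
move/negP => hnE; apply/negPn/negP => hn; apply: hnE.
move: hn; rewrite negb_and -!ltnNge => hn; apply/existsP.
have hkN := ltn_ord k.
case: (leqP a k) => hak.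
  have hk : (k - a < m.+1)%N by lia.
  exists (Ordinal hk) => /=; rewrite subnKC // modn_small //.
have hk : (k + N - a < m.+1)%N by move: hn => /orP[]; lia.
exists (Ordinal hk) => /=.
have -> : (a + (k + N - a) = k + N)%N by lia.
by rewrite modnDr modn_small.
Qed.

Lemma chord_ne (N : nat) (c : ('I_N * 'I_N)%type) : (nat_of_ord c.1 < nat_of_ord c.2)%N ->
  [set c.1; c.2] \in complete_edges N.
Proof.
move=> hc; rewrite /complete_edges inE cards2.
have -> : (c.1 == c.2) = false by apply/negbTE; rewrite -(inj_eq val_inj) /= neq_ltn hc.
done.
Qed.

Theorem lemma2 (R : realType) :
  exists C : nat,
  forall (N : nat) (S : {set 'I_N} -> R),
    (2 <= N)%N ->
    entropy_data S ->
    forall w : {set 'I_N} -> R,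
      wgraph_ok (complete_edges N) w ->
      solves_DBRP (complete_edges N) w id S ->
      exists (V : finType) (E : {set {set V}}) (w' : {set V} -> R) (vb : 'I_N -> V),
        wgraph_ok E w' /\ injective vb /\ planar R E /\
        (#|V| <= C * N ^ 4)%N /\ (#|E| <= C * N ^ 4)%N /\
        solves_DBRP E w' vb S.
Proof.
exists 2%N => N S hN hS w hw hsol.
exists (V R N), (Ed R N), (wt w), (@vb R N).
split; first exact: wgraph_Ed hw.
split; first exact: vb_inj.
split; first exact: Ed_planar.
have h1 : (1 <= N ^ 4)%N by rewrite expn_gt0; lia.
split; first by apply: (leq_trans (card_V R N)); lia.
split; first by have := card_Ed R N; lia.
move=> A hA; have [lo [hi [b [hlh hAb]]]] := contig_interval hA.
have hSA := G_side hw (hsol A hA).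
split.
  exists (Fs R N lo hi); split.
    by apply/fintype.subsetP => e; rewrite /Fs inE => /andP[].
  split; first exact: (Fs_sep hlh hAb).
  by rewrite (cut_upper w hlh hAb) hSA.
move=> F hF hsep; rewrite hSA; apply: cut_lower => // c hc.
by apply: hw.2; exact: chord_ne.
Qed.
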